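(* Let $T$ be the weighted shift on $\ell^2$ associated to a bounded complex sequence $(a_j)_{j\ge1}$. If both $T$ and its Aluthge transform $\Delta(T)$ are $2$-isometries, then $T$ is an isometry, and in particular $T=\Delta(T)=M(T)$.
   Context: $\ell^2$ has canonical basis $(e_j)_{j\ge1}$; the weighted shift associated to $(a_j)$ is the operator with $Te_j=a_je_{j+1}$. For $T\in B(H)$ with polar decomposition $T=V|T|$ ($|T|=(T^*T)^{1/2}$, $V$ the partial isometry with $\ker V=\ker T$), the Aluthge transform is $\Delta(T)=|T|^{1/2}V|T|^{1/2}$ and the mean transform is $M(T)=\frac12(|T|V+V|T|)$. $T$ is a $2$-isometry if $\|x\|^2-2\|Tx\|^2+\|T^2x\|^2=0$ for all $x\in H$. *)

(* Defs.v *)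
(* Operators on l^2(N; C) are modelled as maps on
   all complex sequences; only their behaviour on square-summable sequences matters. *)
From Stdlib Require Import Reals.
From Coquelicot Require Import Coquelicot.
Open Scope R_scope.

Definition vec := nat -> C.
Definition op := vec -> vec.

Definition l2 (x : vec) : Prop := ex_series (fun n => (Cmod (x n)) ^ 2).
Definition nrm2 (x : vec) : R := Series (fun n => (Cmod (x n)) ^ 2).
Definition inner (x y : vec) : C :=
  (Series (fun n => Re (Cmult (x n) (Cconj (y n)))),
   Series (fun n => Im (Cmult (x n) (Cconj (y n))))).

Definition op_eq (A B : op) : Prop :=
  forall x, l2 x -> forall n, A x n = B x n.

Definition is_bounded_op (A : op) : Prop :=
  (forall x, l2 x -> l2 (A x)) /\
  (forall (x y : vec) (c : C), l2 x -> l2 y -> forall n,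
      A (fun k => Cplus (x k) (Cmult c (y k))) n = Cplus (A x n) (Cmult c (A y n))) /\
  (exists M : R, forall x, l2 x -> nrm2 (A x) <= M * nrm2 x).

Definition is_adjoint (A S : op) : Prop :=
  is_bounded_op S /\
  forall x y, l2 x -> l2 y -> inner (A x) y = inner x (S y).

Definition is_positive (P : op) : Prop :=
  is_bounded_op P /\
  forall x, l2 x -> Im (inner (P x) x) = 0 /\ 0 <= Re (inner (P x) x).

Definition is_pos_sqrt (P Q : op) : Prop :=
  is_positive Q /\ op_eq (fun x => Q (Q x)) P.

Definition is_modulus (T P : op) : Prop :=
  exists S, is_adjoint T S /\ is_pos_sqrt (fun x => S (T x)) P.

Definition in_ker (A : op) (x : vec) : Prop := l2 x /\ forall n, A x n = 0.

Definition is_polar_decomposition (T P V : op) : Prop :=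
  is_bounded_op T /\
  is_modulus T P /\
  is_bounded_op V /\
  (forall x, in_ker V x <-> in_ker T x) /\
  (forall x, l2 x -> (forall y, in_ker V y -> inner x y = 0) -> nrm2 (V x) = nrm2 x) /\
  op_eq T (fun x => V (P x)).

(* Aluthge transform |T|^{1/2} V |T|^{1/2}, given Q = |T|^{1/2} *)
Definition aluthge (Q V : op) : op := fun x => Q (V (Q x)).
(* mean transform (|T|V + V|T|)/2, given P = |T| *)
Definition mean_tr (P V : op) : op :=
  fun x n => Cmult (Cplus (P (V x) n) (V (P x) n)) (RtoC (/ 2)).

Definition two_isometry (T : op) : Prop :=
  forall x, l2 x -> nrm2 x - 2 * nrm2 (T x) + nrm2 (T (T x)) = 0.
Definition isometry (T : op) : Prop :=
  forall x, l2 x -> nrm2 (T x) = nrm2 x.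

(* weighted shift T e_j = a_j e_{j+1}, basis indexed from 0 *)
Definition weighted_shift (a : nat -> C) : op :=
  fun x n => match n with O => RtoC 0 | S k => Cmult (a k) (x k) end.

Definition bounded_seq (a : nat -> C) : Prop := exists M : R, forall j, Cmod (a j) <= M.

(* Main.v *)
Require Import Defs.
From Stdlib Require Import Reals Lra Psatz FunctionalExtensionality Arith.
From Coquelicot Require Import Coquelicot.
Open Scope R_scope.

Definition sv (c : C) (m : nat) : vec := fun n => if Nat.eqb n m then c else RtoC 0.

Lemma sum_single (f : nat -> R) m : (forall n, n <> m -> f n = 0) ->
  forall N, sum_n f N = if Nat.ltb N m then 0 else f m.
Proof.
  intros Hf N. induction N as [|N IH].
  - rewrite sum_O. destruct m as [|m]; simpl. reflexivity. apply Hf. lia.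
  - rewrite sum_Sn, IH. unfold plus; simpl.
    destruct (Nat.ltb_spec N m), (Nat.ltb_spec (S N) m).
    + rewrite Hf by lia. ring.
    + assert (S N = m) by lia. subst. ring.
    + lia.
    + rewrite (Hf (S N)) by lia. ring.
Qed.

Lemma single_series (f : nat -> R) m : (forall n, n <> m -> f n = 0) -> is_series f (f m).
Proof.
  intros Hf. unfold is_series.
  apply filterlim_ext_loc with (f := fun _ => f m).
  - exists m. intros N HN. symmetry. etransitivity; [apply (sum_single f m Hf N)|].
    destruct (Nat.ltb_spec N m); [lia|reflexivity].
  - apply filterlim_const.
Qed.

Lemma single_Series (f : nat -> R) m : (forall n, n <> m -> f n = 0) -> Series f = f m.
Proof. intros. apply is_series_unique, single_series; auto. Qed.

Lemma pos_series_zero (f : nat -> R) k : ex_series f -> (forall n, 0 <= f n) ->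
  Series f <= 0 -> f k = 0.
Proof.
  intros He Hp Hs.
  set (g := fun n => if Nat.eqb n k then f k else 0).
  assert (Hg : Series g = f k).
  { replace (f k) with (g k) by (unfold g; rewrite Nat.eqb_refl; auto).
    apply single_Series. intros n Hn. unfold g. apply Nat.eqb_neq in Hn. rewrite Hn. auto. }
  assert (Series g <= Series f).
  { apply Series_le; auto. intros n. unfold g. destruct (Nat.eqb_spec n k).
    subst; split; [auto|lra]. split; [lra|auto]. }
  specialize (Hp k). lra.
Qed.

Lemma l2_sv c m : l2 (sv c m).
Proof.
  unfold l2. exists (Cmod c ^ 2).
  pose proof (single_series (fun n => Cmod (sv c m n) ^ 2) m) as H.
  cbv beta in H. unfold sv in H. rewrite Nat.eqb_refl in H. apply H.
  intros n Hn. unfold sv. apply Nat.eqb_neq in Hn. rewrite Hn.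
  rewrite Cmod_0. ring.
Qed.

Lemma nrm2_sv c m : nrm2 (sv c m) = Cmod c ^ 2.
Proof.
  unfold nrm2. rewrite (single_Series _ m). unfold sv; rewrite Nat.eqb_refl; auto.
  intros n Hn. unfold sv. apply Nat.eqb_neq in Hn. rewrite Hn. rewrite Cmod_0. ring.
Qed.

Lemma inner_sv c m y : inner (sv c m) y = Cmult c (Cconj (y m)).
Proof.
  unfold inner. rewrite (single_Series _ m), (single_Series (fun n => Im _) m).
  - unfold sv; rewrite Nat.eqb_refl. destruct (Cmult c (Cconj (y m))); reflexivity.
  - intros n Hn. unfold sv. apply Nat.eqb_neq in Hn. rewrite Hn. simpl. ring.
  - intros n Hn. unfold sv. apply Nat.eqb_neq in Hn. rewrite Hn. simpl. ring.
Qed.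

Lemma ws_sv a c m : weighted_shift a (sv c m) = sv (Cmult (a m) c) (S m).
Proof.
  apply functional_extensionality. intros [|n]; unfold sv; simpl. reflexivity.
  destruct (Nat.eqb_spec n m). subst; reflexivity. apply injective_projections; simpl; ring.
Qed.

Lemma l2_zero : l2 (fun _ => RtoC 0).
Proof. replace (fun _ : nat => RtoC 0) with (sv (RtoC 0) 0). apply l2_sv.
  apply functional_extensionality; intros n; unfold sv; destruct (Nat.eqb n 0); auto. Qed.

Lemma l2_comb x y c : l2 x -> l2 y -> l2 (fun k => Cplus (x k) (Cmult c (y k))).
Proof.
  intros Hx Hy. unfold l2 in *.
  apply (ex_series_le (V := R_CompleteNormedModule) _ (fun n => 2 * Cmod (x n) ^ 2 + (2 * Cmod c ^ 2) * Cmod (y n) ^ 2)).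
  - intros n. unfold norm; simpl. unfold abs; simpl.
    rewrite Rabs_pos_eq by (apply pow2_ge_0).
    pose proof (Cmod_triangle (x n) (Cmult c (y n))). rewrite Cmod_mult in H.
    pose proof (Cmod_ge_0 (Cplus (x n) (Cmult c (y n)))).
    pose proof (Cmod_ge_0 (x n)). pose proof (Cmod_ge_0 c). pose proof (Cmod_ge_0 (y n)).
    set (z := Cmod (Cplus (x n) (Cmult c (y n)))) in *.
    set (X := Cmod (x n)) in *. set (Y := Cmod (y n)) in *. set (K := Cmod c) in *.
    assert (z * z <= (X + K * Y) * (X + K * Y)) by (apply Rmult_le_compat; lra).
    assert (0 <= (X - K * Y) * (X - K * Y)) by apply Rle_0_sqr.
    simpl. nra.
  - apply (ex_series_plus (fun n => 2 * Cmod (x n) ^ 2) (fun n => (2 * Cmod c ^ 2) * Cmod (y n) ^ 2)).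
    + apply (ex_series_scal_l (V := R_NormedModule) 2 (fun n => Cmod (x n) ^ 2)); auto.
    + apply (ex_series_scal_l (V := R_NormedModule) (2 * Cmod c ^ 2) (fun n => Cmod (y n) ^ 2)); auto.
Qed.

Section Lin.
Variable A : op.
Hypothesis HA : is_bounded_op A.

Lemma lin0 n : A (fun _ => RtoC 0) n = RtoC 0.
Proof.
  destruct HA as [_ [Hl _]].
  pose proof (Hl (fun _ => RtoC 0) (fun _ => RtoC 0) (RtoC 1) l2_zero l2_zero n) as H.
  cbv beta in H.
  replace (fun k : nat => Cplus (RtoC 0) (Cmult (RtoC 1) (RtoC 0))) with (fun _ : nat => RtoC 0) in H
    by (apply functional_extensionality; intros; apply injective_projections; simpl; ring).
  revert H. generalize (A (fun _ : nat => RtoC 0) n). intros [p q] H.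
  unfold Cplus, Cmult, RtoC in H; simpl in H. injection H; intros.
  unfold RtoC; f_equal; lra.
Qed.

Lemma lin_scale y c n : l2 y -> A (fun k => Cmult c (y k)) n = Cmult c (A y n).
Proof.
  intros Hy. destruct HA as [_ [Hl _]].
  pose proof (Hl (fun _ => RtoC 0) y c l2_zero Hy n) as H.
  cbv beta in H.
  replace (fun k : nat => Cplus (RtoC 0) (Cmult c (y k))) with (fun k => Cmult c (y k)) in H
    by (apply functional_extensionality; intros; apply injective_projections; simpl; ring).
  rewrite H, lin0. apply injective_projections; simpl; ring.
Qed.

Lemma l2_A x : l2 x -> l2 (A x).
Proof. destruct HA as [H _]; auto. Qed.
End Lin.

Lemma Re_scal_conj r z : Re (Cmult (Cmult (RtoC r) z) (Cconj z)) = r * Cmod z ^ 2.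
Proof. rewrite Cmod2_alt. destruct z; simpl. ring. Qed.

Lemma nrm2_ge0 x : l2 x -> 0 <= nrm2 x.
Proof.
  intros H. unfold nrm2.
  assert (E : Series (fun _ : nat => 0) = 0) by (apply (single_Series (fun _ => 0) 0); auto).
  rewrite <- E. apply Series_le; auto. intros n; split; [lra|]. apply pow2_ge_0.
Qed.

Lemma eig_lemma (A : op) (c : R) (v : vec) : is_positive A -> 0 < c -> l2 v ->
  (forall k, A (A v) k = Cmult (RtoC (c * c)) (v k)) ->
  forall k, A v k = Cmult (RtoC c) (v k).
Proof.
  intros [HA Hp] Hc Hv Heq k.
  set (y := fun k => Cplus (A v k) (Cmult (RtoC (- c)) (v k))).
  assert (Hy : l2 y) by (apply l2_comb; auto; apply (l2_A A HA); auto).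
  assert (HAy : forall n, A y n = Cmult (RtoC (- c)) (y n)).
  { intros n. destruct HA as [H1 [Hl H3]]. unfold y. rewrite Hl; auto.
    rewrite Heq. apply injective_projections; simpl; ring. }
  destruct (Hp y Hy) as [_ Hre].
  unfold inner in Hre; simpl in Hre.
  rewrite (Series_ext _ (fun n => (- c) * (Cmod (y n) ^ 2))) in Hre
    by (intros n; rewrite HAy; apply Re_scal_conj).
  rewrite Series_scal_l in Hre. fold (nrm2 y) in Hre.
  pose proof (nrm2_ge0 y Hy).
  assert (nrm2 y <= 0) by nra.
  pose proof (pos_series_zero _ k Hy (fun n => pow2_ge_0 _) H0) as Hk.
  simpl in Hk. assert (Cmod (y k) = 0) by nra.
  apply Cmod_eq_0 in H1. unfold y in H1.
  destruct (A v k), (v k). unfold Cplus, Cmult, RtoC in *; simpl in *.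
  injection H1; intros. f_equal; lra.
Qed.
Lemma alg (p0 p1 p2 : R) : 0 < p0 -> 0 < p1 -> 0 < p2 ->
  1 - 2 * p0^2 + p0^2 * p1^2 = 0 ->
  1 - 2 * p1^2 + p1^2 * p2^2 = 0 ->
  1 - 2 * (p0 * p1) + (p0 * p1) * (p1 * p2) = 0 -> p0 = 1.
Proof.
  intros h0 h1 h2 E0 E1 F.
  set (a := p0 * p0). set (x := p0 * p1). set (y := p1 * p2).
  assert (H1 : x * x = 2 * a - 1) by (unfold x, a; nra).
  assert (H2 : a * (y * y) = 3 * a - 2).
  { unfold a, y. replace (p0 * p0 * (p1 * p2 * (p1 * p2))) with (p0^2 * (p1^2 * p2^2)) by ring.
    replace (p1^2 * p2^2) with (2 * p1^2 - 1) by lra.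
    replace (p0 ^ 2 * (2 * p1 ^ 2 - 1)) with (2 * (p0^2 * p1^2) - p0^2) by ring.
    replace (p0^2 * p1^2) with (2 * p0^2 - 1) by lra. ring. }
  assert (H3 : x * y = 2 * x - 1) by (unfold x, y in *; lra).
  assert (E : (x * x) * (a * (y * y)) = a * ((x * y) * (x * y))) by ring.
  rewrite H1, H2, H3 in E.
  assert (H4 : 2 * a * x = a * a + 2 * a - 1) by nra.
  assert (E' : (2 * a * x) * (2 * a * x) = 4 * a * a * (x * x)) by ring.
  rewrite H4, H1 in E'.
  assert (H5 : (a - 1) ^ 4 = 0) by nra.
  assert (a - 1 = 0).
  { destruct (Req_dec (a-1) 0); auto. exfalso; apply (pow_nonzero (a-1) 4); auto. }
  unfold a in *. nra.
Qed.

Lemma S_formula a (Sa : op) : is_adjoint (weighted_shift a) Sa ->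
  forall y, l2 y -> forall k, Sa y k = Cmult (Cconj (a k)) (y (S k)).
Proof.
  intros [_ Had] y Hy k.
  pose proof (Had (sv (RtoC 1) k) y (l2_sv _ _) Hy) as H.
  rewrite ws_sv, !inner_sv in H.
  apply (f_equal Cconj) in H. rewrite !Cmult_conj, !Cconj_conj in H.
  replace (Sa y k) with (Cmult (Cconj (RtoC 1)) (Sa y k)).
  rewrite <- H. apply injective_projections; simpl; ring.
  apply injective_projections; simpl; ring.
Qed.

Lemma sv_scale c m : sv c m = (fun k => Cmult c (sv (RtoC 1) m k)).
Proof.
  apply functional_extensionality; intros k; unfold sv; destruct (Nat.eqb k m);
  apply injective_projections; simpl; ring.
Qed.

Lemma A_sv (A : op) c m d m' : is_bounded_op A -> A (sv (RtoC 1) m) = sv d m' ->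
  A (sv c m) = sv (Cmult c d) m'.
Proof.
  intros HA E. apply functional_extensionality; intros n.
  rewrite (sv_scale c m). rewrite (lin_scale A HA) by apply l2_sv. rewrite E.
  unfold sv. destruct (Nat.eqb n m'); apply injective_projections; simpl; ring.
Qed.

Lemma Cmod_RtoC_pos r : 0 <= r -> Cmod (RtoC r) = r.
Proof. intros h. rewrite Cmod_R. apply Rabs_pos_eq; auto. Qed.

Theorem mainTheorem13 (a : nat -> C) (P V Q : op) :
  bounded_seq a ->
  is_polar_decomposition (weighted_shift a) P V ->
  is_pos_sqrt P Q ->
  two_isometry (weighted_shift a) ->
  two_isometry (aluthge Q V) ->
  isometry (weighted_shift a) /\
  op_eq (weighted_shift a) (aluthge Q V) /\
  op_eq (weighted_shift a) (mean_tr P V).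
Proof.
  intros Hb [HT [[Sa [Hadj [HPpos HPP]]] [HV [Hker [Hiso HTVP]]]]] [HQpos HQQ] H2T H2D.
  assert (E : forall j, 1 - 2 * Cmod (a j) ^ 2 + Cmod (a j) ^ 2 * Cmod (a (S j)) ^ 2 = 0).
  { intros j. pose proof (H2T _ (l2_sv (RtoC 1) j)) as H.
    rewrite !ws_sv, !nrm2_sv, !Cmod_mult, Cmod_1 in H. nra. }
  assert (Hp : forall j, 0 < Cmod (a j)).
  { intros j. pose proof (E j). pose proof (Cmod_ge_0 (a j)).
    destruct (Req_dec (Cmod (a j)) 0) as [h|h]. rewrite h in H. lra. lra. }
  assert (HST : forall x, l2 x -> forall k,
            Sa (weighted_shift a x) k = Cmult (RtoC (Cmod (a k) ^ 2)) (x k)).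
  { intros x Hx k. rewrite (S_formula a Sa Hadj) by (apply (l2_A _ HT); auto).
    unfold weighted_shift. rewrite Cmod2_conj. apply injective_projections; simpl; ring. }
  assert (HPsv : forall j, P (sv (RtoC 1) j) = sv (RtoC (Cmod (a j))) j).
  { intro j. apply functional_extensionality; intros k.
    rewrite (eig_lemma P (Cmod (a j)) (sv (RtoC 1) j) HPpos (Hp j) (l2_sv _ _)).
    - unfold sv; destruct (Nat.eqb k j); apply injective_projections; simpl; ring.
    - intros k'. pose proof (HPP _ (l2_sv (RtoC 1) j) k') as H. cbv beta in H. rewrite H.
      rewrite HST by apply l2_sv. unfold sv; destruct (Nat.eqb_spec k' j); subst;
      apply injective_projections; simpl; ring. }
  assert (Hq : forall j, 0 < sqrt (Cmod (a j))) by (intros; apply sqrt_lt_R0; auto).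
  assert (HQsv : forall j, Q (sv (RtoC 1) j) = sv (RtoC (sqrt (Cmod (a j)))) j).
  { intro j. apply functional_extensionality; intros k.
    rewrite (eig_lemma Q (sqrt (Cmod (a j))) (sv (RtoC 1) j) HQpos (Hq j) (l2_sv _ _)).
    - unfold sv; destruct (Nat.eqb k j); apply injective_projections; simpl; ring.
    - intros k'. pose proof (HQQ _ (l2_sv (RtoC 1) j) k') as H. cbv beta in H. rewrite H.
      rewrite HPsv. rewrite sqrt_sqrt by (apply Rlt_le; auto).
      unfold sv; destruct (Nat.eqb_spec k' j); subst;
      apply injective_projections; simpl; ring. }
  assert (HVsv : forall j, V (sv (RtoC 1) j) = sv (Cmult (a j) (RtoC (/ Cmod (a j)))) (S j)).
  { intro j. apply functional_extensionality; intros n.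
    pose proof (HTVP _ (l2_sv (RtoC 1) j) n) as H. cbv beta in H. rewrite HPsv, ws_sv in H.
    rewrite (sv_scale (RtoC (Cmod (a j))) j) in H. rewrite (lin_scale V HV) in H by apply l2_sv.
    assert (Hnz : Cmod (a j) <> 0) by (apply Rgt_not_eq, Hp).
    replace (V (sv (RtoC 1) j) n) with
      (Cmult (RtoC (/ Cmod (a j))) (Cmult (RtoC (Cmod (a j))) (V (sv (RtoC 1) j) n))).
    - rewrite <- H. unfold sv; destruct (Nat.eqb n (S j)); apply injective_projections; simpl; field; auto.
    - generalize (V (sv (RtoC 1) j) n). intros [u w]. apply injective_projections; simpl; field; auto. }
  assert (HQc : forall c j, Q (sv c j) = sv (Cmult c (RtoC (sqrt (Cmod (a j))))) j).
  { intros c j. apply A_sv. apply HQpos. apply HQsv. }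
  assert (HVc : forall c j, V (sv c j) = sv (Cmult c (Cmult (a j) (RtoC (/ Cmod (a j))))) (S j)).
  { intros c j. apply A_sv. apply HV. apply HVsv. }
  assert (HD : forall c j, aluthge Q V (sv c j) =
     sv (Cmult (Cmult (Cmult c (RtoC (sqrt (Cmod (a j))))) (Cmult (a j) (RtoC (/ Cmod (a j)))))
                (RtoC (sqrt (Cmod (a (S j)))))) (S j)).
  { intros c j. unfold aluthge. rewrite HQc, HVc, HQc. reflexivity. }
  assert (F : forall j, 1 - 2 * (Cmod (a j) * Cmod (a (S j)))
                + (Cmod (a j) * Cmod (a (S j))) * (Cmod (a (S j)) * Cmod (a (S (S j)))) = 0).
  { intros j. pose proof (H2D _ (l2_sv (RtoC 1) j)) as H.
    rewrite !HD, !nrm2_sv, !Cmod_mult, Cmod_1 in H.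
    rewrite !Cmod_RtoC_pos in H by (first [apply sqrt_pos | apply Rlt_le, Rinv_0_lt_compat; auto]).
    rewrite !Rinv_r in H by (apply Rgt_not_eq, Hp).
    pose proof (sqrt_sqrt (Cmod (a j)) (Rlt_le _ _ (Hp j))).
    pose proof (sqrt_sqrt (Cmod (a (S j))) (Rlt_le _ _ (Hp (S j)))).
    pose proof (sqrt_sqrt (Cmod (a (S (S j)))) (Rlt_le _ _ (Hp (S (S j))))).
    set (A0 := sqrt (Cmod (a j))) in *. set (A1 := sqrt (Cmod (a (S j)))) in *.
    set (A2 := sqrt (Cmod (a (S (S j))))) in *.
    rewrite <- H0, <- H1, <- H2. nra. }
  assert (H1 : forall j, Cmod (a j) = 1).
  { intros j. apply (alg _ (Cmod (a (S j))) (Cmod (a (S (S j))))); auto. }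
  assert (HPx : forall x, l2 x -> P x = x).
  { intros x Hx. apply functional_extensionality; intros k.
    rewrite (eig_lemma P 1 x HPpos Rlt_0_1 Hx).
    - apply injective_projections; simpl; ring.
    - intros k'. pose proof (HPP _ Hx k') as H. cbv beta in H. rewrite H, HST by auto.
      rewrite H1. apply injective_projections; simpl; ring. }
  assert (HQx : forall x, l2 x -> Q x = x).
  { intros x Hx. apply functional_extensionality; intros k.
    rewrite (eig_lemma Q 1 x HQpos Rlt_0_1 Hx).
    - apply injective_projections; simpl; ring.
    - intros k'. pose proof (HQQ _ Hx k') as H. cbv beta in H. rewrite H, HPx by auto.
      apply injective_projections; simpl; ring. }
  assert (HVx : forall x, l2 x -> V x = weighted_shift a x).
  { intros x Hx. apply functional_extensionality; intros n.
    pose proof (HTVP _ Hx n) as H. cbv beta in H. rewrite HPx in H by auto. auto. }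
  split; [|split].
  - intros x Hx. unfold nrm2. rewrite Series_incr_1 by (apply (l2_A _ HT); auto).
    cbv beta. unfold weighted_shift at 1. rewrite Cmod_0.
    rewrite (Series_ext _ (fun k => Cmod (x k) ^ 2)). ring.
    intros k. unfold weighted_shift. rewrite Cmod_mult, H1. ring.
  - intros x Hx n. unfold aluthge. rewrite (HQx x Hx), (HVx x Hx).
    rewrite (HQx _ (l2_A _ HT x Hx)). reflexivity.
  - intros x Hx n. unfold mean_tr. rewrite (HPx x Hx), (HVx x Hx).
    rewrite (HPx _ (l2_A _ HT x Hx)).
    generalize (weighted_shift a x n). intros [u w]. apply injective_projections; simpl; field.
Qed.
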